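(* Let $x$ be a stable g-matching with $x\ne x^{\max}$, let $f\in F$, and let $(a(1),c(1)),\dots,(a(k),c(k))$ be pairwise disjoint legal $f$-pairs under $x$ (all $2k$ edges distinct). Then for every $I\subseteq\{1,\dots,k\}$, $$C_f\Big(x_f+\sum_{i=1}^k\mathbf 1^{a(i)}-\sum_{i\in I}\mathbf 1^{c(i)}\Big)=x_f+\sum_{i=1}^k\mathbf 1^{a(i)}-\sum_{i=1}^k\mathbf 1^{c(i)}.$$
   Context: Let $G=(V,E)$ be a finite bipartite graph with color classes $W$ and $F$; the edge joining $w\in W$ and $f\in F$ is written $wf$. Let $b\in\mathbb Z_+^E$ be capacities. For $v\in V$, $E_v$ is the set of edges at $v$, $\mathcal B_v=\{z\in\mathbb Z_+^{E_v}: z\le b|_{E_v}\}$, $\mathbf 1^e$ the unit vector of $e$, $|z|=\sum_e|z(e)|$, $\wedge,\vee$ componentwise min/max. Each $v$ has a choice function $C_v:\mathcal B_v\to\mathcal B_v$ with $C_v(z)\le z$ and, for all $z,z'$: (A1) $z\ge z'\ge C_v(z)\Rightarrow C_v(z')=C_v(z)$; (A2) $z\ge z'\Rightarrow C_v(z)\wedge z'\le C_v(z')$; (A3) $z\ge z'\Rightarrow|C_v(z)|\ge|C_v(z')|$. $z$ is acceptable if $C_v(z)=z$; for distinct acceptable $z,z'$, $z'\prec_v z$ iff $C_v(z\vee z')=z$. $x_v$ = restriction of $x$ to $E_v$. A g-matching is $x\in\mathbb Z_+^E$, $x\le b$, each $x_v$ acceptable; $x\prec_F y$ (distinct) iff $x_f\preceq_f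 y_f$ for all $f\in F$. $e\in E_v$ is interesting for $v$ under acceptable $z$ if some $z'\in\mathcal B_v$ has $z'(e)>z(e)$, $z'(e')=z(e')$ for $e'\neq e$, $C_v(z')(e)>z(e)$; $e=wf$ is interesting for $v\in\{w,f\}$ under a g-matching $x$ if so under $x_v$, and blocks $x$ if interesting for both endpoints; stable g-matchings (no blocking edge) form a finite lattice under $\prec_F$ with maximum $x^{\max}$. For stable $x$, $U_F^+(x)$ is the set of edges $wf$ interesting for $f$ under $x$. A legal $f$-pair under $x$ is $(a,c)$ with $a\in U_F^+(x)\cap E_f$, $c\in E_f\setminus\{a\}$ and $C_f(x_f+\mathbf 1^a)=x_f+\mathbf 1^a-\mathbf 1^c$. *)

(* Defs.v *)
From mathcomp Require Import all_boot.
Set Implicit Arguments. Unset Strict Implicit. Unset Printing Implicit Defensive.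

Section GMatch.
Variables (W F E : finType) (ew : E -> W) (ef : E -> F).
Variable b : E -> nat.

Definition vec := {ffun E -> nat}.
Definition vertex := (W + F)%type.

Definition incident (v : vertex) (e : E) : bool :=
  match v with inl w => ew e == w | inr f => ef e == f end.

Definition simple_bipartite : Prop :=
  forall e e', ew e = ew e' -> ef e = ef e' -> e = e'.

Definition vle (z z' : vec) : Prop := forall e, z e <= z' e.
Definition vmeet (z z' : vec) : vec := [ffun e => minn (z e) (z' e)].
Definition vjoin (z z' : vec) : vec := [ffun e => maxn (z e) (z' e)].
Definition vadd (z z' : vec) : vec := [ffun e => z e + z' e].
(* truncated subtraction; only used where it is exact *)
Definition vsub (z z' : vec) : vec := [ffun e => z e - z' e].
Definition vnorm (z : vec) : nat := \sum_(e : E) z e.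
Definition unitv (e0 : E) : vec := [ffun e => nat_of_bool (e == e0)].
(* x_v : restriction of x to E_v, viewed as a vector vanishing off E_v *)
Definition restr (v : vertex) (x : vec) : vec :=
  [ffun e => if incident v e then x e else 0].

Definition inB (v : vertex) (z : vec) : Prop :=
  forall e, z e <= b e /\ (~~ incident v e -> z e = 0).

(* choice functions C_v : B_v -> B_v with C_v(z) <= z and (A1)-(A3) *)
Variable C : vertex -> vec -> vec.

Definition choice_axioms : Prop :=
  forall v,
  [/\ (forall z, inB v z -> vle (C v z) z),
      (forall z z', inB v z -> inB v z' ->
         vle z' z -> vle (C v z) z' -> C v z' = C v z),
      (forall z z', inB v z -> inB v z' ->
         vle z' z -> vle (vmeet (C v z) z') (C v z')) &
      (forall z z', inB v z -> inB v z' ->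
         vle z' z -> vnorm (C v z') <= vnorm (C v z))].

Definition acceptable (v : vertex) (z : vec) : Prop := inB v z /\ C v z = z.

Definition prefv (v : vertex) (z' z : vec) : Prop :=
  [/\ acceptable v z, acceptable v z', z <> z' & C v (vjoin z z') = z].
Definition prefeqv (v : vertex) (z' z : vec) : Prop :=
  (acceptable v z /\ z' = z) \/ prefv v z' z.

Definition gmatching (x : vec) : Prop :=
  vle x [ffun e => b e] /\ forall v, acceptable v (restr v x).

Definition precF (x y : vec) : Prop :=
  x <> y /\ forall f : F, prefeqv (inr f) (restr (inr f) x) (restr (inr f) y).

Definition interesting_vec (v : vertex) (z : vec) (e : E) : Prop :=
  incident v e /\
  exists z' : vec, [/\ inB v z', z e < z' e,
     (forall e', e' != e -> z' e' = z e') & z e < C v z' e].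

Definition interesting (v : vertex) (x : vec) (e : E) : Prop :=
  interesting_vec v (restr v x) e.

Definition blocks (x : vec) (e : E) : Prop :=
  interesting (inl (ew e)) x e /\ interesting (inr (ef e)) x e.

Definition stable (x : vec) : Prop := gmatching x /\ forall e, ~ blocks x e.

Definition is_xmax (xmax : vec) : Prop :=
  stable xmax /\ forall y, stable y -> y = xmax \/ precF y xmax.

Definition UFplus (x : vec) (e : E) : Prop := interesting (inr (ef e)) x e.

(* legal f-pair (a,c) under x:  C_f(x_f + 1^a) = x_f + 1^a - 1^c,
   written additively (as an identity in Z^E):
   C_f(x_f + 1^a) + 1^c = x_f + 1^a *)
Definition legal_pair (x : vec) (f : F) (a c : E) : Prop :=
  [/\ UFplus x a, ef a = f, ef c = f, c <> a &
      vadd (C (inr f) (vadd (restr (inr f) x) (unitv a))) (unitv c)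
      = vadd (restr (inr f) x) (unitv a)].

Definition sumunit (k : nat) (I : {set 'I_k}) (a : 'I_k -> E) : vec :=
  [ffun e => \sum_(i in I) nat_of_bool (a i == e)].

End GMatch.

(* Main.v *)
Require Import Defs.
From mathcomp Require Import all_boot.
From mathcomp Require Import zify.

Lemma su_at (E : finType) k (g : 'I_k -> E) (inj : injective g) i :
  sumunit setT g (g i) = 1.
Proof.
rewrite ffunE (bigD1 i) ?in_setT //= eqxx big1 // => j /andP[_ ne].
by rewrite (inj_eq inj) (negbTE ne).
Qed.

Arguments su_at {E k g} inj i.

Lemma su_out (E : finType) k (I : {set 'I_k}) (g : 'I_k -> E) e :
  (forall i, g i != e) -> sumunit I g e = 0.
Proof. by move=> H; rewrite ffunE big1 // => i _; rewrite (negbTE (H i)). Qed.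

Arguments su_out {E k I g e}.

Lemma su_le (E : finType) k (I : {set 'I_k}) (g : 'I_k -> E) e :
  sumunit I g e <= sumunit setT g e.
Proof.
rewrite !ffunE [X in _ <= X]big_mkcond [X in X <= _]big_mkcond /=.
apply: leq_sum => i _; rewrite in_setT; by case: (i \in I).
Qed.

Arguments su_le {E k} I g e.

Lemma su_norm (E : finType) k (g : 'I_k -> E) : vnorm (sumunit setT g) = k.
Proof.
rewrite /vnorm; under eq_bigr do rewrite ffunE.
rewrite exchange_big /=.
under eq_bigr => i _.
  rewrite (bigD1 (g i)) //= eqxx big1; last first.
    by move=> e /negbTE; rewrite eq_sym => ->.
  over.
by rewrite sum_nat_const cardsT card_ord muln1.
Qed.

Arguments su_norm {E k} g.

Lemma vnorm_add (E : finType) (u v : vec E) : vnorm (vadd u v) = vnorm u + vnorm v.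
Proof. by rewrite /vnorm -big_split; apply: eq_bigr => e _; rewrite ffunE. Qed.

Arguments vnorm_add {E} u v.

Lemma inB_le (W F E : finType) (ew : E -> W) (ef : E -> F) (b : E -> nat) v z z' :
  inB ew ef b v z -> vle z' z -> inB ew ef b v z'.
Proof.
move=> H L e; have [h1 h2] := H e; split; first exact: leq_trans (L e) h1.
by move=> /h2 h; apply/eqP; rewrite -leqn0 -h; exact: L e.
Qed.

Arguments inB_le {W F E ew ef b v z z'}.

Theorem lemma3p6 (W F E : finType) (ew : E -> W) (ef : E -> F) (b : E -> nat)
  (C : vertex W F -> vec E -> vec E)
  (Hsimple : simple_bipartite ew ef)
  (HC : choice_axioms ew ef b C)
  (xmax : vec E) (Hxmax : is_xmax ew ef b C xmax)
  (x : vec E) (Hx : stable ew ef b C x) (Hne : x <> xmax)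
  (f : F) (k : nat) (a c : 'I_k -> E)
  (Hinja : injective a) (Hinjc : injective c)
  (Hac : forall i j, a i <> c j)
  (Hlegal : forall i, legal_pair ew ef b C x f (a i) (c i))
  (I : {set 'I_k}) :
  vadd (C (inr f)
          (vsub (vadd (restr ew ef (inr f) x) (sumunit setT a)) (sumunit I c)))
       (sumunit setT c)
  = vadd (restr ew ef (inr f) x) (sumunit setT a).
Proof.
have [A0 A1 A2 A3] := HC (inr f).
have [[_ Hacc] _] := Hx.
have [inBxf Cxf] := Hacc (inr f).
set xf := restr ew ef (inr f) x in inBxf Cxf *.
set y := vadd xf (sumunit setT a).
have yb : inB ew ef b (inr f) y.
  move=> e; split.
    rewrite ffunE; case: (pickP (fun i => a i == e)) => [i /eqP <- | none].
      rewrite (su_at Hinja).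
      have [UF efa _ _ _] := Hlegal i.
      move: UF; rewrite /UFplus /interesting efa => -[_ [z' [z'B lt _ _]]].
      rewrite addn1; apply: leq_trans lt _; exact: (z'B (a i)).1.
    rewrite su_out; last by move=> i; rewrite (negbT (none i)).
    by rewrite addn0; exact: (inBxf e).1.
  move=> ni; rewrite ffunE (inBxf e).2 // su_out //.
  move=> i; apply/eqP => ae; move: ni; rewrite -ae /=.
  by have [_ -> _ _ _] := Hlegal i; rewrite eqxx.
have Hpt : forall e, C (inr f) y e + sumunit setT c e <= y e.
  move=> e; case: (pickP (fun i => c i == e)) => [i /eqP <- | none].
    rewrite (su_at Hinjc).
    have [_ _ _ _ Heq] := Hlegal i.
    set z' := vadd xf (unitv (a i)) in Heq.
    have zy : vle z' y.
      move=> e'; rewrite !ffunE leq_add2l; case: eqP => [->|//].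
      by have := su_at Hinja i; rewrite ffunE => ->.
    have z'B := inB_le yb zy.
    have H2 := A2 y z' yb z'B zy (c i).
    have H3 := congr1 (fun v : vec E => v (c i)) Heq.
    move: H2 H3; rewrite /= !ffunE eqxx.
    have -> : (c i == a i) = false by apply/eqP => h; apply: (Hac i i); rewrite h.
    rewrite big1; last by move=> j _; rewrite (introF eqP (Hac j i)).
    rewrite /=; set X := (if _ then _ else _); lia.
  rewrite su_out; last by move=> i; rewrite (negbT (none i)).
  by rewrite addn0; exact: A0 y yb e.
have Hn : vnorm xf <= vnorm (C (inr f) y).
  by rewrite -{1}Cxf; apply: A3 => // e; rewrite [y e]ffunE; exact: leq_addr.
have Eq : forall e, C (inr f) y e + sumunit setT c e = y e.
  have H := @leqif_sum E predT (fun e => C (inr f) y e + sumunit setT c e == y e)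
    (fun e => C (inr f) y e + sumunit setT c e) (fun e => y e)
    (fun e _ => leqif_eq (Hpt e)).
  have HS : \sum_(e | predT e) (C (inr f) y e + sumunit setT c e) == \sum_(e | predT e) y e.
    rewrite eqn_leq H.1 /=.
    have := vnorm_add xf (sumunit setT a); rewrite su_norm.
    have := vnorm_add (C (inr f) y) (sumunit setT c); rewrite su_norm.
    rewrite /vnorm; under [in X in X -> _]eq_bigr do rewrite ffunE.
    by move=> -> ->; rewrite leq_add2r; exact: Hn.
  move: HS; rewrite H.2 => /forallP Hf e; exact/eqP/(implyP (Hf e)).
have -> : C (inr f) (vsub y (sumunit I c)) = C (inr f) y.
  apply: A1 => //.
  - by apply: inB_le yb _ => e; rewrite ffunE leq_subr.
  - by move=> e; rewrite [vsub _ _ e]ffunE leq_subr.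
  - move=> e; rewrite [vsub _ _ e]ffunE -(Eq e); have := su_le I c e; lia.
by apply/ffunP => e; rewrite [LHS]ffunE; exact: Eq.
Qed.
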